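(* Let $t\ge 2$ and $n_0=2^t-1$. There exists a spanning subgraph $H$ of $Q_{n_0}$ containing no subgraph isomorphic to $Q_2$, together with disjoint sets $C,D\subseteq\{0,1\}^{n_0}$, each of which is both an independent set and a dominating set of $H$, with $|C|=2^{n_0}/(n_0+1)$ and $|D|=3\cdot 2^{n_0}/(n_0+1)$, such that every edge of $H$ has at least one endpoint in $C\cup D$ and $e(H)\le 2^{n_0+1}$.
   Context: $Q_n$ is the hypercube on $\{0,1\}^n$ with edges between vertices differing in exactly one coordinate; $Q_2$ is the 4-cycle. A set $S$ is dominating in $H$ if every vertex of $H$ is in $S$ or adjacent in $H$ to a vertex of $S$; independent means no edge of $H$ has both endpoints in $S$. *)

(* Defs.v *)
From mathcomp Require Import all_boot.
Set Implicit Arguments. Unset Strict Implicit. Unset Printing Implicit Defensive.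

Definition cube (n : nat) := {ffun 'I_n -> bool}.

Definition qadj (n : nat) (x y : cube n) : bool :=
  #|[set i | x i != y i]| == 1.

(* A spanning subgraph H of Q_n is given by its edge set E, a set of
   unordered pairs {x,y} each of which is an edge of Q_n; its vertex set
   is all of {0,1}^n. *)
Definition subcube_edges (n : nat) (E : {set {set cube n}}) : Prop :=
  forall e, e \in E -> exists x y, qadj x y /\ e = [set x; y].

Definition hadj (n : nat) (E : {set {set cube n}}) (x y : cube n) : bool :=
  (x != y) && ([set x; y] \in E).

Definition Q2_free (n : nat) (E : {set {set cube n}}) : Prop :=
  forall a b c d : cube n,
    uniq [:: a; b; c; d] ->
    ~ [/\ hadj E a b, hadj E b c, hadj E c d & hadj E d a].

Definition independent (n : nat) (E : {set {set cube n}}) (S : {set cube n}) : Prop :=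
  forall x y, x \in S -> y \in S -> ~~ hadj E x y.

Definition dominating (n : nat) (E : {set {set cube n}}) (S : {set cube n}) : Prop :=
  forall v : cube n, v \in S \/ exists2 s, s \in S & hadj E v s.

(* Main.v *)
From HB Require Import structures.
From mathcomp Require Import all_boot.
From Stdlib Require PeanoNat.
Require Import Defs.
Set Implicit Arguments. Unset Strict Implicit. Unset Printing Implicit Defensive.

Lemma lxorA : associative Nat.lxor.
Proof. by move=> x y z; rewrite PeanoNat.Nat.lxor_assoc. Qed.
HB.instance Definition _ := Monoid.isComLaw.Build nat 0 Nat.lxor lxorA
  PeanoNat.Nat.lxor_comm PeanoNat.Nat.lxor_0_l.

Definition flp n (v : cube n) (k : 'I_n) : cube n := [ffun z => v z (+) (z == k)].
Definition syn n (v : cube n) : nat := \big[Nat.lxor/0]_(i < n | v i) i.+1.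

Lemma flpK n (v : cube n) k : flp (flp v k) k = v.
Proof. by apply/ffunP=> z; rewrite !ffunE -addbA addbb addbF. Qed.

Lemma flp_neq n (v : cube n) k : flp v k != v.
Proof. by apply/eqP=> /ffunP /(_ k); rewrite ffunE eqxx addbT; case: (v k). Qed.

Lemma qadj_flp n (v : cube n) k : qadj v (flp v k).
Proof.
rewrite /qadj (_ : [set i | v i != flp v k i] = [set k]) ?cards1 //.
by apply/setP=> z; rewrite !inE ffunE; case: (v z); case: (z == k).
Qed.

Lemma lxorK a b : Nat.lxor (Nat.lxor a b) b = a.
Proof. by rewrite PeanoNat.Nat.lxor_assoc PeanoNat.Nat.lxor_nilpotent PeanoNat.Nat.lxor_0_r. Qed.

Lemma lxor_inj a x y : Nat.lxor a x = Nat.lxor a y -> x = y.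
Proof.
move=> h; have := congr1 (Nat.lxor a) h.
by rewrite -!PeanoNat.Nat.lxor_assoc PeanoNat.Nat.lxor_nilpotent !PeanoNat.Nat.lxor_0_l.
Qed.

Lemma syn_flp n (v : cube n) k : syn (flp v k) = Nat.lxor (syn v) k.+1.
Proof.
rewrite /syn [LHS]big_mkcond [in RHS]big_mkcond /= (bigD1 k) //= [in RHS](bigD1 k) //=.
rewrite (eq_bigr (fun i => if v i then i.+1 else 0)); last first.
  by move=> i /negbTE ik; rewrite ffunE ik addbF.
rewrite ffunE eqxx addbT.
set r := \big[_/_]_(i | _) _.
case: (v k) => /=.
  by rewrite PeanoNat.Nat.lxor_0_l [Nat.lxor k.+1 r]PeanoNat.Nat.lxor_comm lxorK.
by rewrite PeanoNat.Nat.lxor_0_l PeanoNat.Nat.lxor_comm.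
Qed.
Lemma expn_pow a b : expn a b = Nat.pow a b.
Proof. elim: b => [|b IH] //=. by rewrite expnS IH. Qed.

Lemma lxor_lt t a b : 0 < t -> a < 2 ^ t -> b < 2 ^ t -> Nat.lxor a b < 2 ^ t.
Proof.
move=> t0 ha hb.
case: (posnP (Nat.lxor a b)) => [->|hp]; first by rewrite expn_gt0.
apply/ltP; idtac.
have L : forall x, x < 2 ^ t -> (Nat.log2 x < t)%coq_nat.
  move=> x hx; case: (posnP x) => [->|xp]; first by apply/ltP.
  apply/PeanoNat.Nat.log2_lt_pow2; first by apply/ltP.
  by rewrite -expn_pow; apply/ltP.
rewrite expn_pow; apply/PeanoNat.Nat.log2_lt_pow2; first by apply/ltP.
have := PeanoNat.Nat.log2_lxor a b; have := L _ ha; have := L _ hb. by move=> *; apply: PeanoNat.Nat.le_lt_trans; last apply: PeanoNat.Nat.max_lub_lt; eauto.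
Qed.
Definition dd (s : nat) : nat := if Nat.odd s then 3 else 1.
Definition Gs (s s' : nat) : bool := ((s != 0) && (s' == 0)) || ((3 < s) && (s' == dd s)).
Definition Gsym s s' := Gs s s' || Gs s' s.

Lemma dd_le s : dd s <= 3. Proof. by rewrite /dd; case: (Nat.odd s). Qed.
Lemma dd_odd s : Nat.odd (dd s) = true. Proof. by rewrite /dd; case: (Nat.odd s). Qed.
Lemma dd_pos s : 0 < dd s. Proof. by rewrite /dd; case: (Nat.odd s). Qed.

Lemma Gsym_sym s s' : Gsym s s' = Gsym s' s. Proof. by rewrite /Gsym orbC. Qed.

Lemma Gsym0 y : Gsym 0 y -> y != 0.
Proof. by move=> h; apply/negP=> /eqP y0; subst; move: h; rewrite /Gsym /Gs /dd. Qed.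

Lemma H2 x y z : Gsym x y -> Gsym x z -> y != z -> x != 0 -> y != 0 -> z != 0 ->
  [/\ 3 < y, 3 < z, x = dd y & x = dd z].
Proof.
rewrite /Gsym /Gs => hy hz yz x0 y0 z0.
move: hy hz; rewrite (negbTE x0) (negbTE y0) (negbTE z0) /=.
case/orP=> /andP[hy1 /eqP hy2]; case/orP=> /andP[hz1 /eqP hz2].
- by rewrite hy2 hz2 eqxx in yz.
- by move: (dd_le z); rewrite -hz2 leqNgt hy1.
- by move: (dd_le y); rewrite -hy2 leqNgt hz1.
- by split.
Qed.

Lemma odd_dd y z : dd y = dd z -> Nat.odd y = Nat.odd z.
Proof. by rewrite /dd; case: (Nat.odd y); case: (Nat.odd z). Qed.

Lemma zero_case s0 s1 s2 s3 : s0 = 0 -> Gsym s0 s1 -> Gsym s1 s2 -> Gsym s2 s3 -> Gsym s3 s0 ->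
  s0 != s2 -> s1 != s3 ->
  Nat.odd s1 (+) Nat.odd s2 (+) Nat.odd s3 = false -> False.
Proof.
move=> e0 g01 g12 g23 g30 d02 d13 par; subst s0.
have n1 := Gsym0 g01. have n3 : s3 != 0 by apply: Gsym0; rewrite Gsym_sym.
have n2 : s2 != 0 by rewrite eq_sym.
rewrite Gsym_sym in g12.
have [_ _ e1 e3] := H2 g12 g23 d13 n2 n1 n3.
move: par; rewrite e1 dd_odd (odd_dd (etrans (esym e1) e3)).
by case: Nat.odd.
Qed.

Lemma nocycle s0 s1 s2 s3 : Gsym s0 s1 -> Gsym s1 s2 -> Gsym s2 s3 -> Gsym s3 s0 ->
  s0 != s2 -> s1 != s3 ->
  Nat.odd s0 (+) Nat.odd s1 (+) Nat.odd s2 (+) Nat.odd s3 = false -> False.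
Proof.
move=> g01 g12 g23 g30 d02 d13 par.
case: (eqVneq s0 0) => [e0|n0].
  by apply: (zero_case e0 g01 g12 g23 g30 d02 d13); move: par; rewrite e0.
case: (eqVneq s1 0) => [e1|n1].
  apply: (zero_case e1 g12 g23 g30 g01 d13); first by rewrite eq_sym.
  by move: par; rewrite e1 /=; case: (Nat.odd s0); case: (Nat.odd s2); case: (Nat.odd s3).
case: (eqVneq s2 0) => [e2|n2].
  apply: (zero_case e2 g23 g30 g01 g12); first by rewrite eq_sym.
    by rewrite eq_sym.
  by move: par; rewrite e2 /=; case: (Nat.odd s0); case: (Nat.odd s1); case: (Nat.odd s3).
case: (eqVneq s3 0) => [e3|n3].
  apply: (zero_case e3 g30 g01 g12 g23); first by rewrite eq_sym.
    by [].
  by move: par; rewrite e3 /=; case: (Nat.odd s0); case: (Nat.odd s1); case: (Nat.odd s2).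
rewrite Gsym_sym in g01.
have [h0 h2 e _] := H2 g01 g12 d02 n1 n0 n2.
rewrite Gsym_sym in g12.
have [h1 _ _ _] := H2 g12 g23 d13 n2 n1 n3.
by move: (dd_le s0); rewrite -e leqNgt h1.
Qed.

Definition ix n (i0 : 'I_n) (s : nat) : 'I_n := insubd i0 s.-1.

Lemma ix_val n (i0 : 'I_n) t s : n.+1 = 2 ^ t -> 0 < s < 2 ^ t -> (ix i0 s).+1 = s.
Proof.
move=> hn /andP[s0 st]; rewrite /ix val_insubd.
have -> : s.-1 < n by rewrite -ltnS prednK // hn.
by rewrite prednK.
Qed.

Lemma syn_lt n t (v : cube n) : 0 < t -> n.+1 = 2 ^ t -> syn v < 2 ^ t.
Proof.
move=> t0 hn; rewrite /syn; apply: (big_ind (fun x => x < 2 ^ t)).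
- by rewrite expn_gt0.
- by move=> x y; apply: lxor_lt.
- by move=> i _; rewrite -hn ltnS.
Qed.

Definition cls n (s : nat) := #|[set v : cube n | syn v == s]|.

Lemma cls_eq n (i0 : 'I_n) t s : n.+1 = 2 ^ t -> 0 < s < 2 ^ t -> cls n s = cls n 0.
Proof.
move=> hn hs; rewrite /cls.
have -> : [set v : cube n | syn v == s] = (fun v : cube n => flp v (ix i0 s)) @: [set v : cube n | syn v == 0].
  apply/setP=> v; rewrite inE; apply/idP/imsetP.
    move=> /eqP e; exists (flp v (ix i0 s)); last by rewrite flpK.
    by rewrite inE syn_flp (ix_val i0 hn hs) e PeanoNat.Nat.lxor_nilpotent.
  by case=> w; rewrite inE => /eqP e ->; rewrite syn_flp e (ix_val i0 hn hs) PeanoNat.Nat.lxor_0_l.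
by rewrite card_imset //; move=> x y /(congr1 (fun w => flp w (ix i0 s))); rewrite !flpK.
Qed.

Lemma total n (i0 : 'I_n) t : 0 < t -> n.+1 = 2 ^ t -> 2 ^ n = 2 ^ t * cls n 0.
Proof.
move=> t0 hn.
have -> : 2 ^ n = \sum_(v : cube n) 1.
  by rewrite sum1_card card_ffun card_bool card_ord.
rewrite (partition_big (fun v => Ordinal (syn_lt v t0 hn)) predT) //=.
rewrite (eq_bigr (fun _ => cls n 0)); last first.
  move=> j _; rewrite sum1dep_card /=.
  have -> : [set x : cube n | Ordinal (syn_lt x t0 hn) == j] = [set x | syn x == j].
    by apply/setP=> x; rewrite !inE.
  case: (posnP j) => [j0|jp]; first by rewrite /cls j0.
  by apply: (cls_eq i0 hn); rewrite jp ltn_ord.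
by rewrite big_const_ord iter_addn_0 mulnC.
Qed.

Lemma odd_lxor a b : Nat.odd (Nat.lxor a b) = Nat.odd a (+) Nat.odd b.
Proof.
rewrite -!PeanoNat.Nat.bit0_odd PeanoNat.Nat.lxor_spec.
by case: (Nat.testbit a 0); case: (Nat.testbit b 0).
Qed.

Definition kf n (i0 : 'I_n) (p : cube n * bool) : 'I_n :=
  ix i0 (if p.2 then Nat.lxor (syn p.1) (dd (syn p.1)) else syn p.1).
Definition fe n (i0 : 'I_n) (p : cube n * bool) : {set cube n} := [set p.1; flp p.1 (kf i0 p)].
Definition good n (p : cube n * bool) : bool := if p.2 then 3 < syn p.1 else syn p.1 != 0.
Definition EE n (i0 : 'I_n) : {set {set cube n}} := [set fe i0 p | p in [set p | good p]].

Lemma good_syn n (i0 : 'I_n) t p : 1 < t -> n.+1 = 2 ^ t -> good p ->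
  syn (flp p.1 (kf i0 p)) = (if p.2 then dd (syn p.1) else 0) /\ Gs (syn p.1) (syn (flp p.1 (kf i0 p))).
Proof.
move=> ht hn; have t0 : 0 < t by apply: ltnW.
have hl := syn_lt p.1 t0 hn.
move: hl; case: p => [w []]; rewrite /good /kf /= => hl g.

- have h4 : 4 <= 2 ^ t by rewrite (_ : 4 = 2 ^ 2) // leq_exp2l.
  have hs : 0 < Nat.lxor (syn w) (dd (syn w)) < 2 ^ t.
    have hd : dd (syn w) < 2 ^ t by apply: leq_ltn_trans (dd_le _) _; apply: leq_trans h4.
    rewrite lt0n (lxor_lt t0 hl hd) andbT.
    apply/eqP=> /PeanoNat.Nat.lxor_eq e.
    by move: (dd_le (syn w)); rewrite -e leqNgt g.
  rewrite syn_flp (ix_val i0 hn hs) -PeanoNat.Nat.lxor_assoc PeanoNat.Nat.lxor_nilpotent PeanoNat.Nat.lxor_0_l.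
  by split=> //; rewrite /Gs g eqxx orbT.
- have hs : 0 < syn w < 2 ^ t by rewrite lt0n g hl.
  rewrite syn_flp (ix_val i0 hn hs) PeanoNat.Nat.lxor_nilpotent.
  by split=> //; rewrite /Gs g.
Qed.

Lemma hadjI n (i0 : 'I_n) t p : 1 < t -> n.+1 = 2 ^ t -> good p ->
  hadj (EE i0) p.1 (flp p.1 (kf i0 p)) /\ hadj (EE i0) (flp p.1 (kf i0 p)) p.1.
Proof.
move=> ht hn g.
have m : fe i0 p \in EE i0 by apply/imsetP; exists p => //; rewrite inE.
have e2 : [set flp p.1 (kf i0 p); p.1] = fe i0 p.
  by apply/setP=> z; rewrite /fe !inE orbC.
by rewrite /hadj flp_neq (eq_sym p.1) flp_neq e2; split.

Qed.

Lemma hadjE n (i0 : 'I_n) t x y : 1 < t -> n.+1 = 2 ^ t -> hadj (EE i0) x y ->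
  exists k, y = flp x k /\ Gsym (syn x) (syn y).
Proof.
move=> ht hn /andP[xy /imsetP[p]]; rewrite inE => g e.
have [_ G] := good_syn i0 ht hn g.
have hx : x \in fe i0 p by rewrite -e set21.
have hy : y \in fe i0 p by rewrite -e set22.
rewrite /fe !inE in hx hy.
case/orP: hx => /eqP ex; case/orP: hy => /eqP ey; subst.
- by rewrite eqxx in xy.
- by exists (kf i0 p); split=> //; rewrite /Gsym G.
- by exists (kf i0 p); rewrite flpK; split=> //; rewrite /Gsym G orbT.
- by rewrite eqxx in xy.
Qed.

Lemma Gsym_cover s s' : Gsym s s' -> (s <= 3) || (s' <= 3).
Proof.
rewrite /Gsym /Gs; case/orP=> /orP[/andP[_ /eqP ->]|/andP[_ /eqP ->]];
  by rewrite ?dd_le ?orbT.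
Qed.

Lemma Gsym_D s s' : 0 < s <= 3 -> 0 < s' <= 3 -> Gsym s s' = false.
Proof.
move=> /andP[s0 s3] /andP[t0 t3]; rewrite /Gsym /Gs -!lt0n s0 t0 /= !ltnNge s3 t3 /=.
by rewrite -(prednK s0) -(prednK t0).
Qed.

Lemma Q2free_EE n (i0 : 'I_n) t : 1 < t -> n.+1 = 2 ^ t -> Q2_free (EE i0).
Proof.
move=> ht hn a b c d u [hab hbc hcd hda].
have [i [eb gab]] := hadjE ht hn hab.
have [j [ec gbc]] := hadjE ht hn hbc.
have [k [ed gcd]] := hadjE ht hn hcd.
have [l [ea gda]] := hadjE ht hn hda.
move: u; rewrite /= !inE !negb_or => /andP[/andP[ab /andP[ac ad]] /andP[/andP[bc bd] _]].
have ij : i != j.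
  by apply/eqP=> e; move: ac; rewrite ec eb e flpK eqxx.
have ed' : d = flp a l by rewrite ea flpK.
have il : i != l.
  by apply/eqP=> e; move: bd; rewrite eb ed' e eqxx.
have ik : i = k.
  have := congr1 (fun v : cube n => v i) ea.
  rewrite ed ec eb !ffunE eqxx (negbTE ij) (negbTE il) /=.
  by case: (a i); case: eqP.
subst k.
have sb : syn b = Nat.lxor (syn a) i.+1 by rewrite eb syn_flp.
have sc : syn c = Nat.lxor (syn b) j.+1 by rewrite ec syn_flp.
have sd : syn d = Nat.lxor (syn c) i.+1 by rewrite ed syn_flp.
have sd' : syn d = Nat.lxor (syn a) l.+1 by rewrite ed' syn_flp.
apply: (nocycle gab gbc gcd gda).
- apply/eqP; rewrite sc sb PeanoNat.Nat.lxor_assoc -{1}(PeanoNat.Nat.lxor_0_r (syn a)).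
  move=> /lxor_inj /esym /PeanoNat.Nat.lxor_eq [] e.
  by rewrite (ord_inj e) eqxx in ij.
- apply/eqP; rewrite sd' sb => /lxor_inj [] e.
  by rewrite (ord_inj e) eqxx in il.
- rewrite sd sc sb !odd_lxor.
  by case: (Nat.odd (syn a)); case: (Nat.odd i.+1); case: (Nat.odd j.+1).
Qed.

Lemma cardD n (i0 : 'I_n) t : 0 < t -> n.+1 = 2 ^ t -> 1 < t ->
  #|[set v : cube n | 0 < syn v <= 3]| = 3 * cls n 0.
Proof.
move=> t0 hn ht.
have h4 : 4 <= 2 ^ t by rewrite (_ : 4 = 2 ^ 2) // leq_exp2l.
rewrite -sum1dep_card big_mkcond /=.
rewrite (eq_bigr (fun v : cube n => ((syn v == 1) : nat) + ((syn v == 2) : nat) + ((syn v == 3) : nat))); last first.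
  by move=> v _; case: (syn v) => [|[|[|[|m]]]].
rewrite !big_split /=.
have E m : \sum_(v : cube n) ((syn v == m) : nat) = cls n m.
  by rewrite /cls -sum1dep_card [RHS]big_mkcond /=; apply: eq_bigr => v _; case: eqP.
rewrite !E !(cls_eq i0 hn) //; first by rewrite -addnA !mulSn mul0n addn0.
- by apply: leq_trans h4.
- by apply: leq_trans h4.
Qed.

Lemma main_gen n (i0 : 'I_n) t : 1 < t -> n.+1 = 2 ^ t ->
  exists (E : {set {set cube n}}) (C D : {set cube n}),
    [/\ subcube_edges E /\ Q2_free E,
        [disjoint C & D],
        (independent E C /\ dominating E C) /\ (independent E D /\ dominating E D),
        #|C| = 2 ^ n %/ n.+1
        /\ #|D| = (3 * 2 ^ n) %/ n.+1 &
        (forall x y, hadj E x y -> (x \in C :|: D) || (y \in C :|: D))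
        /\ #|E| <= 2 ^ n.+1].
Proof.
move=> ht hn; have t0 : 0 < t by apply: ltnW.
have h4 : 4 <= 2 ^ t by rewrite (_ : 4 = 2 ^ 2) // leq_exp2l.
have tot := total i0 t0 hn.
have p2 : 0 < 2 ^ t by rewrite expn_gt0.
exists (EE i0), [set v : cube n | syn v == 0], [set v : cube n | 0 < syn v <= 3].
split.
- split; last exact: Q2free_EE ht hn.
  move=> e /imsetP[p _ ->]; exists p.1, (flp p.1 (kf i0 p)); split=> //.
  exact: qadj_flp.
- by rewrite -setI_eq0; apply/eqP/setP=> v; rewrite !inE; case: eqP => // ->.
- split; split.
  + move=> x y; rewrite !inE => /eqP sx /eqP sy; apply/negP=> /(hadjE ht hn)[k [_]].
    by rewrite sx sy.
  + move=> v; case: (eqVneq (syn v) 0) => [e|ne]; first by left; rewrite inE e.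
    right; have g : good (v, false) by [].
    have [s _] := good_syn i0 ht hn g.
    have [hv _] := hadjI i0 ht hn g.
    by exists (flp v (kf i0 (v, false))); rewrite // inE s.
  + move=> x y; rewrite !inE => hx hy; apply/negP=> /(hadjE ht hn)[k [_]].
    by rewrite Gsym_D.
  + move=> v; case hv: (0 < syn v <= 3); first by left; rewrite inE hv.
    right; case: (posnP (syn v)) => [e|ne].
    * have hs : 0 < 1 < 2 ^ t by apply: leq_trans h4.
      set w := flp v (ix i0 1).
      have sw : syn w = 1 by rewrite /w syn_flp (ix_val i0 hn hs) e.
      have g : good (w, false) by rewrite /good /= sw.
      have [_ hw] := hadjI i0 ht hn g.
      have ev : flp w (kf i0 (w, false)) = v by rewrite /kf /= sw flpK.
      by exists w; rewrite ?inE ?sw //; rewrite ev in hw.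
    * have g : good (v, true) by rewrite /good /=; move: hv; rewrite ne /= ltnNge => ->.
      have [s _] := good_syn i0 ht hn g.
      have [hv' _] := hadjI i0 ht hn g.
      by exists (flp v (kf i0 (v, true))); rewrite // inE s /= dd_pos dd_le.
- rewrite tot (cardD i0 t0 hn ht) hn mulnCA !mulKn //.
- split.
  + move=> x y /(hadjE ht hn)[k [_ G]]; rewrite !inE.
    case/orP: (Gsym_cover G) => h; apply/orP; [left|right];
      by case: (syn _) h => [|[|[|[|m]]]].
  + apply: leq_trans (leq_imset_card _ _) _.
    apply: leq_trans (max_card _) _.
    by rewrite card_prod card_ffun card_ord !card_bool expnSr.
Qed.

Theorem mainTheorem10 (t : nat) (ht : 2 <= t) :
  exists (E : {set {set cube (2 ^ t).-1}}) (C D : {set cube (2 ^ t).-1}),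
    [/\ subcube_edges E /\ Q2_free E,
        [disjoint C & D],
        (independent E C /\ dominating E C) /\ (independent E D /\ dominating E D),
        #|C| = 2 ^ (2 ^ t).-1 %/ ((2 ^ t).-1).+1
        /\ #|D| = (3 * 2 ^ (2 ^ t).-1) %/ ((2 ^ t).-1).+1 &
        (forall x y, hadj E x y -> (x \in C :|: D) || (y \in C :|: D))
        /\ #|E| <= 2 ^ ((2 ^ t).-1).+1].
Proof.
have hn : ((2 ^ t).-1).+1 = 2 ^ t by rewrite prednK // expn_gt0.
have h0 : 0 < (2 ^ t).-1.
  by rewrite -ltnS hn (_ : 1 = 2 ^ 0) // ltn_exp2l // ltnW.
exact: (main_gen (Ordinal h0) ht hn).
Qed.
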